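(* Let $k\ge3$ be odd and $p_k^\star<p\le1$. There exists $\varepsilon=\varepsilon(p,k)>0$ such that for every finite graph $G=(V,E)$ without isolated vertices, every round $t\ge0$, every configuration $\bar{\mathbf x}$ and every $u\in V$, under the $(k,p,\mathcal B)$-Edge-Majority dynamics, $$\mathbb E\big[\phi_u^{(t+1)}\mid \mathbf X^{(t)}=\bar{\mathbf x}\big]\le(1-\varepsilon)\,\phi_{\max}^{(t)}.$$
   Context: $N(u)$ is the neighbourhood of $u$, $\delta_u=|N(u)|$. States are in $\{\mathcal R,\mathcal B\}$; $\mathbf X^{(t)}$ is the configuration at round $t$, $R^{(t)}$ the set of $\mathcal R$ nodes, $\phi_u^{(t)}=|N(u)\cap R^{(t)}|/\delta_u$ and $\phi^{(t)}_{\max}=\max_{u\in V}\phi_u^{(t)}$. $(k,p,\mathcal B)$-Edge-Majority: in each round every node $u$ independently samples $k$ neighbours uniformly with replacement; for each sampled $v$, independently, $u$ sees $v$ as $\mathcal B$ with probability $p$ and otherwise sees $v$'s true current state; $u$'s next state is the state seen more often. $F_{p,k}(x)=\Pr[\mathrm{Bin}(k,(1-p)x)\ge(k+1)/2]$. $p_k^\star\in[1/9,1/2)$ is the (unique) value such that for $0\le p<p_k^\star$ the equation $F_{p,k}(x)=x$ on $[0,1]$ has exactly three solutions, for $p=p_k^\star$ exactly two, and for $p>p_k^\star$ only $0$. *)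

(* Defs.v *)
From HB Require Import structures.
From mathcomp Require Import all_boot all_order all_algebra.
From mathcomp Require Import reals.
Set Implicit Arguments. Unset Strict Implicit. Unset Printing Implicit Defensive.
Import Order.TTheory GRing.Theory Num.Theory.
Local Open Scope ring_scope.

(* States: true = R (red), false = B (blue). A configuration is x : {ffun V -> bool}. *)

Section Defs.
Variable R : realType.

(* F_{p,k}(x) = Pr[Bin(k,(1-p)x) >= (k+1)/2] *)
Definition Fpk (p : R) (k : nat) (x : R) : R :=
  \sum_(j < k.+1 | ((k.+1)./2 <= j)%N)
     ('C(k, j))%:R * ((1 - p) * x) ^+ j * (1 - (1 - p) * x) ^+ (k - j).

Definition is_pstar (k : nat) (ps : R) : Prop :=
  [/\ 1 / 9 <= ps, ps < 1 / 2,
     (forall q, 0 <= q -> q < ps ->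
        exists x1 x2 x3, [/\ 0 <= x1 /\ x1 < x2 /\ x2 < x3 /\ x3 <= 1,
          Fpk q k x1 = x1, Fpk q k x2 = x2, Fpk q k x3 = x3 &
          forall x, 0 <= x -> x <= 1 -> Fpk q k x = x -> [\/ x = x1, x = x2 | x = x3]]),
     (exists x1 x2, [/\ 0 <= x1 /\ x1 < x2 /\ x2 <= 1,
          Fpk ps k x1 = x1, Fpk ps k x2 = x2 &
          forall x, 0 <= x -> x <= 1 -> Fpk ps k x = x -> x = x1 \/ x = x2]) &
     (forall q, ps < q -> q <= 1 ->
        forall x, 0 <= x -> x <= 1 -> Fpk q k x = x -> x = 0)].

Variable V : finType.
Variable adj : rel V.

Definition nbrs (u : V) : {set V} := [set v | adj u v].
Definition deg (u : V) : nat := #|nbrs u|.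

Definition phi (x : {ffun V -> bool}) (u : V) : R :=
  (#|[set v in nbrs u | x v]|)%:R / (deg u)%:R.

Definition phimax (x : {ffun V -> bool}) : R := \big[Num.max/0]_(v : V) phi x v.

(* Probability that node u is in state R in the next round of the
   (k,p,B)-Edge-Majority dynamics, from configuration x:
   u samples s : 'I_k -> V (each s i uniform in N(u), independently, with
   replacement), and noise bits b : 'I_k -> bool (b i = true w.p. p, meaning
   s i is seen as B; otherwise its true state is seen). u becomes R iff
   R is seen more often than B. *)
Definition probR (k : nat) (p : R) (x : {ffun V -> bool}) (u : V) : R :=
  \sum_(s : {ffun 'I_k -> V} | [forall i, adj u (s i)])
   \sum_(b : {ffun 'I_k -> bool})
     (\prod_(i < k) (deg u)%:R^-1) *
     (\prod_(i < k) (if b i then p else 1 - p)) *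
     (if (k - #|[set i | ~~ b i && x (s i)]| < #|[set i | ~~ b i && x (s i)]|)%N
      then 1 else 0).

Definition stepProb (k : nat) (p : R) (x y : {ffun V -> bool}) : R :=
  \prod_(v : V) (if y v then probR k p x v else 1 - probR k p x v).

Definition Enext (k : nat) (p : R) (x : {ffun V -> bool}) (u : V) : R :=
  \sum_(y : {ffun V -> bool}) stepProb k p x y * phi y u.

End Defs.

(* Main.v *)
Require Import Defs.
From HB Require Import structures.
From mathcomp Require Import all_boot all_order all_algebra.
From mathcomp Require Import reals.
From mathcomp Require Import boolp classical_sets topology normedtype derive.
From mathcomp Require Import ring lra zify.
Import Order.TTheory GRing.Theory Num.Theory.
Import numFieldNormedType.Exports.
Local Open Scope ring_scope.
Section Ana.
Variable R : realType.
Variables (k : nat) (p : R).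
Hypothesis hk3 : (3 <= k)%N.
Hypothesis hp0 : 0 <= p.
Hypothesis hp1 : p <= 1.
Hypothesis hfix : forall x : R, 0 <= x -> x <= 1 -> Fpk p k x = x -> x = 0.

Definition Hf (x : R) : R :=
  \sum_(j < k.+1 | ((k.+1)./2 <= j)%N)
     ('C(k, j))%:R * (1 - p) ^+ j * x ^+ j.-1 * (1 - (1 - p) * x) ^+ (k - j).

Definition Hp : {poly R} :=
  \sum_(j < k.+1 | ((k.+1)./2 <= j)%N)
     (('C(k, j))%:R * (1 - p) ^+ j)%:P * 'X ^+ j.-1 * (1 - (1 - p)%:P * 'X) ^+ (k - j).

Lemma HpE x : Hp.[x] = Hf x.
Proof.
rewrite /Hp /Hf horner_sum; apply: eq_bigr => j _.
by rewrite !hornerE.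
Qed.

Lemma half_ge2 j : ((k.+1)./2 <= j)%N -> (0 < j.-1)%N.
Proof.
move=> h; have : (2 <= (k.+1)./2)%N.
  by rewrite -[2%N]/((4)./2) half_leq.
move=> h2; have := leq_trans h2 h; case: j {h} => //= [] [] //.
Qed.

Lemma FHf x : Fpk p k x = x * Hf x.
Proof.
rewrite /Fpk /Hf big_distrr; apply: eq_bigr => j hj /=.
have hj1 := @half_ge2 j hj.
case: j hj hj1 => [[|m] hm] //= _ _.
rewrite exprMn [x ^+ m.+1]exprS.
by ring.
Qed.

Lemma Hf0 : Hf 0 = 0.
Proof.
rewrite /Hf big1 // => j hj; rewrite expr0n.
by have := @half_ge2 j hj; case: (j.-1) => // n _; rewrite /= mulr0 mul0r.
Qed.

Lemma Hf_ge0 x : 0 <= x -> x <= 1 -> 0 <= Hf x.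
Proof.
move=> x0 x1; rewrite /Hf; apply: sumr_ge0 => j _.
have hq : 0 <= 1 - p by rewrite subr_ge0.
have hq1 : 1 - p <= 1 by rewrite lerBlDr lerDl.
apply: mulr_ge0; last first.
  apply: exprn_ge0; rewrite subr_ge0.
  by nra.
by rewrite !mulr_ge0 ?exprn_ge0.
Qed.

Lemma Hf_cont : Hf = horner Hp.
Proof. by apply/funext => y; rewrite HpE. Qed.

Lemma Hf_lt1 x : 0 < x -> x <= 1 -> Hf x < 1.
Proof.
move=> x0 x1; rewrite ltNge; apply/negP => hge.
have fixc c : 0 < c -> c <= 1 -> Hf c = 1 -> False.
  move=> c0 c1 hc; have := @hfix c (ltW c0) c1.
  by rewrite FHf hc mulr1 => /(_ erefl) e; move: c0; rewrite e ltxx.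
move: hge; rewrite le_eqVlt => /orP[/eqP e|hlt]; first exact: (fixc x x0 x1 (esym e)).
have hcont : {within `[0, x], continuous Hf}%classic.
  by rewrite Hf_cont; apply: continuous_subspaceT; exact: continuous_horner.
have hb : Num.min (Hf 0) (Hf x) <= 1 <= Num.max (Hf 0) (Hf x).
  by rewrite Hf0 ge_min le_max ler01 (ltW hlt) orbT.
have [c] := IVT (ltW x0) hcont hb.
rewrite in_itv /= => /andP[c0 cx] hc.
move: c0; rewrite le_eqVlt => /orP[/eqP e|c0].
  by move: hc; rewrite -e Hf0 => /eqP; rewrite eq_sym oner_eq0.
by apply: (fixc c c0 (le_trans cx x1) hc).
Qed.

Lemma eps_exists : exists eps : R, [/\ 0 < eps, eps <= 1 &
  forall x, 0 <= x -> x <= 1 -> Fpk p k x <= (1 - eps) * x].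
Proof.
have hcont : {within `[0, 1], continuous Hf}%classic.
  by rewrite Hf_cont; apply: continuous_subspaceT; exact: continuous_horner.
have [c] := EVT_max ler01 hcont.
rewrite in_itv /= => /andP[c0 c1] hmax.
have hc1 : Hf c < 1.
  move: c0; rewrite le_eqVlt => /orP[/eqP e|c0]; first by rewrite -e Hf0 ltr01.
  exact: Hf_lt1.
exists (1 - Hf c); split.
- by rewrite subr_gt0.
- by rewrite lerBlDr lerDl Hf_ge0.
- move=> x x0 x1; rewrite FHf opprB addrC subrK mulrC.
  by apply: ler_wpM2r => //; apply: hmax; rewrite in_itv /= x0 x1.
Qed.
End Ana.
Section Comb.
Variable R : realType.

Lemma prod_ind (I : finType) (P : pred I) :
  \prod_(i : I) (if P i then 1 else 0 : R) = if [forall i, P i] then 1 else 0.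
Proof.
case: (boolP [forall i, P i]) => [/forallP H | /forallPn [i Hi]].
  by apply: big1 => i _; rewrite H.
by rewrite (bigD1 i) //= (negbTE Hi) mul0r.
Qed.

Lemma marg (I : finType) (a : I -> R) v :
  \sum_(y : {ffun I -> bool}) (\prod_w (if y w then a w else 1 - a w)) * (if y v then 1 else 0)
  = a v.
Proof.
pose h w (b : bool) := (if b then a w else 1 - a w) * (if w == v then (if b then 1 else 0) else 1).
transitivity (\prod_w \sum_(b : bool) h w b).
  rewrite bigA_distr_bigA; apply: eq_bigr => y _.
  rewrite /h big_split /=; congr (_ * _).
  rewrite [RHS](bigD1 v) //= eqxx big1 ?mulr1 // => w /negbTE wv.
  by rewrite wv.
rewrite (bigD1 v) //= [X in _ * X]big1 => [|w /negbTE wv].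
  by rewrite big_bool /h /= eqxx mulr1 mulr0 addr0 mulr1.
by rewrite big_bool /h /= wv !mulr1 addrC subrK.
Qed.

Lemma sum_card (T : finType) (f : nat -> R) :
  \sum_(A : {set T}) f #|A| = \sum_(j < #|T|.+1) ('C(#|T|, j))%:R * f j.
Proof.
rewrite (partition_big (fun A : {set T} => (inord #|A| : 'I_#|T|.+1)) xpredT) //=.
apply: eq_bigr => j _.
have hj := ltn_ord j.
rewrite (eq_bigl (fun A : {set T} => A \in [set A : {set T} | #|A| == j])); last first.
  by move=> A; rewrite inE -(inj_eq val_inj) /= inordK // ltnS max_card.
transitivity (\sum_(A in [set A : {set T} | #|A| == j]) f j).
  by apply: eq_bigr => A; rewrite inE => /eqP ->.
by rewrite sumr_const card_draws mulr_natl.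
Qed.

Lemma odd_maj (k j : nat) : odd k -> (k - j < j)%N = ((k.+1)./2 <= j)%N.
Proof.
move=> ho; have := odd_double_half k; rewrite ho /= => hk.
set m := k./2 in hk; rewrite -hk.
rewrite uphalf_half oddD odd_double /= add0n uphalf_double -!muln2.
apply/idP/idP; lia.
Qed.

Variable V : finType.
Variable adj : rel V.

Lemma card_sum (A : {set V}) (P : pred V) :
  (#|[set v in A | P v]|)%:R = \sum_(v in A) (if P v then 1 else 0 : R).
Proof.
rewrite -big_mkcondr /=.
rewrite (eq_bigl (fun v => v \in [set v in A | P v])); last by move=> v; rewrite inE.
by rewrite sumr_const.
Qed.

Lemma Enext_eq k (p : R) x u :
  Enext adj k p x u = ((deg adj u)%:R)^-1 * \sum_(v in nbrs adj u) probR adj k p x v.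
Proof.
rewrite /Enext /phi.
transitivity (\sum_(y : {ffun V -> bool}) \sum_(v in nbrs adj u)
   ((deg adj u)%:R)^-1 * (stepProb adj k p x y * (if y v then 1 else 0))).
  apply: eq_bigr => y _; rewrite card_sum -big_distrr -big_distrr /=.
  by rewrite [RHS]mulrCA [_^-1 * _]mulrC.
rewrite exchange_big big_distrr /=; apply: eq_bigr => v _.
by rewrite -big_distrr /= /stepProb marg.
Qed.

Lemma sum_card_n (T : finType) n (f : nat -> R) : #|T| = n ->
  \sum_(A : {set T}) f #|A| = \sum_(j < n.+1) ('C(n, j))%:R * f j.
Proof. by move=> <-; exact: sum_card. Qed.

Lemma probR_eq k (p : R) x v : odd k -> (0 < deg adj v)%N ->
  probR adj k p x v = Fpk p k (phi R adj x v).
Proof.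
move=> hodd hd.
set d : R := (deg adj v)%:R.
have d0 : d != 0 by rewrite /d pnatr_eq0 -lt0n.
set q : R := (1 - p) * phi R adj x v.
pose h (S : {set 'I_k}) (i : 'I_k) (v' : V) (b' : bool) : R :=
  d^-1 * (if b' then p else 1 - p) * (if adj v v' then 1 else 0) *
  (if (i \in S) == (~~ b' && x v') then 1 else 0).
pose g (n : nat) : R := if (k - n < n)%N then 1 else 0.
have stepA : probR adj k p x v = \sum_(S : {set 'I_k})
   (\sum_(s : {ffun 'I_k -> V}) \sum_(b : {ffun 'I_k -> bool}) \prod_i h S i (s i) (b i)) * g #|S|.
  transitivity (\sum_(s : {ffun 'I_k -> V}) \sum_(b : {ffun 'I_k -> bool})
       \sum_(S : {set 'I_k}) (\prod_i h S i (s i) (b i)) * g #|S|).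
    rewrite /probR big_mkcond /=; apply: eq_bigr => s _.
    have key : forall b : {ffun 'I_k -> bool},
      \sum_(S : {set 'I_k}) (\prod_i h S i (s i) (b i)) * g #|S| =
      (if [forall i, adj v (s i)] then 1 else 0) *
      ((\prod_(i < k) d^-1) * (\prod_(i < k) (if b i then p else 1 - p)) *
       (if (k - #|[set i | ~~ b i && x (s i)]| < #|[set i | ~~ b i && x (s i)]|)%N
        then 1 else 0)).
      move=> b.
      have hp : forall S, \prod_i h S i (s i) (b i) =
        (\prod_(i < k) d^-1) * (\prod_(i < k) (if b i then p else 1 - p)) *
        (if [forall i, adj v (s i)] then 1 else 0) *
        (if S == [set i | ~~ b i && x (s i)] then 1 else 0).
        move=> S.
        have E : [forall i, (i \in S) == (~~ b i && x (s i))] =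
                 (S == [set i | ~~ b i && x (s i)]).
          apply/forallP/eqP => [H|->].
            by apply/setP => i; rewrite inE; apply/eqP; exact: H.
          by move=> i; rewrite inE.
        by rewrite /h !big_split /= !prod_ind E.
      rewrite (bigD1 [set i | ~~ b i && x (s i)]) //= [X in _ + X]big1 => [|S /negbTE hS].
        rewrite hp eqxx addr0 mulr1 /g.
        move: (\prod_(i < k) d^-1) (\prod_(i < k) (if b i then p else 1 - p)) (if [forall i, adj v (s i)] then 1 else 0 : R) => A B C.
        move: (if _ then 1 else 0 : R) => G; ring.
      by rewrite hp hS mulr0 mul0r.
    case: ifP => hall.
      by apply: eq_bigr => b _; rewrite key hall mul1r.
    by symmetry; apply: big1 => b _; rewrite key hall mul0r.
  under eq_bigr => s _ do rewrite exchange_big.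
  rewrite exchange_big; apply: eq_bigr => S _.
  rewrite big_distrl; apply: eq_bigr => s _ /=.
  by rewrite big_distrl.
have peri : forall S i, \sum_(v' : V) \sum_(b' : bool) h S i v' b' =
    if i \in S then q else 1 - q.
  move=> S i.
  under eq_bigr => v' _ do rewrite big_bool.
  have cs := card_sum (nbrs adj v) (fun v' => x v').
  case: (boolP (i \in S)) => hi.
    transitivity (\sum_(v' in nbrs adj v) d^-1 * (1 - p) * (if x v' then 1 else 0)).
      rewrite [RHS]big_mkcond; apply: eq_bigr => v' _.
      by rewrite /h /nbrs inE hi; case: (adj v v'); case: (x v') => /=; ring.
    rewrite -big_distrr /= -cs /q /phi /deg -/d; by field.
  transitivity (\sum_(v' in nbrs adj v) d^-1 * (1 - (1 - p) * (if x v' then 1 else 0))).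
    rewrite [RHS]big_mkcond; apply: eq_bigr => v' _.
    by rewrite /h /nbrs inE (negbTE hi); case: (adj v v'); case: (x v') => /=; ring.
  rewrite -big_distrr /= sumrB -big_distrr /= -cs sumr_const /q /phi /deg -/d.
  by field.
have stepB : forall S, \sum_(s : {ffun 'I_k -> V}) \sum_(b : {ffun 'I_k -> bool})
    \prod_i h S i (s i) (b i) = q ^+ #|S| * (1 - q) ^+ (k - #|S|).
  move=> S.
  transitivity (\prod_i \sum_(v' : V) \sum_(b' : bool) h S i v' b').
    rewrite bigA_distr_bigA; apply: eq_bigr => s _; by rewrite bigA_distr_bigA.
  rewrite (eq_bigr _ (fun i _ => peri S i)).
  rewrite (bigID (fun i => i \in S)) /=.
  have e1 : \prod_(i | i \in S) (if i \in S then q else 1 - q) = q ^+ #|S|.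
    by rewrite (eq_bigr (fun=> q)) ?prodr_const // => i ->.
  have e2 : \prod_(i | i \notin S) (if i \in S then q else 1 - q) = (1 - q) ^+ (k - #|S|).
    rewrite (eq_bigr (fun=> 1 - q)) => [|i /negbTE -> //].
    rewrite (eq_bigl (fun i => i \in ~: S)) => [|i]; last by rewrite inE.
    by rewrite prodr_const cardsCs card_ord finset.setCK.
  by rewrite e1 e2.
rewrite stepA.
transitivity (\sum_(S : {set 'I_k}) (fun n => q ^+ n * (1 - q) ^+ (k - n) * g n) #|S|).
  by apply: eq_bigr => S _; rewrite stepB.
etransitivity.
  exact: (@sum_card_n 'I_k k (fun n => q ^+ n * (1 - q) ^+ (k - n) * g n) (card_ord k)).
rewrite /Fpk -/q [RHS]big_mkcond; apply: eq_bigr => j _.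
rewrite /g odd_maj //; case: ifP => _; first by rewrite mulr1 !mulrA.
by rewrite !mulr0.
Qed.
End Comb.
Theorem lemma5p5 (R : realType) (k : nat) (hk3 : (3 <= k)%N) (hkodd : odd k)
  (ps p : R) (hps : is_pstar k ps) (hpsp : ps < p) (hp1 : p <= 1) :
  exists eps : R, 0 < eps /\
    forall (V : finType) (adj : rel V),
      symmetric adj -> irreflexive adj -> (forall u, exists v, adj u v) ->
      forall (x : {ffun V -> bool}) (u : V),
        @Enext R V adj k p x u <= (1 - eps) * @phimax R V adj x.
Proof.
case: hps => h19 _ _ _ h5.
have hp0 : 0 <= p by apply: ltW; apply: le_lt_trans hpsp; apply: le_trans h19; lra.
have hfix : forall x : R, 0 <= x -> x <= 1 -> Fpk p k x = x -> x = 0.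
  by move=> y y0 y1 e; exact: (h5 p hpsp hp1 y y0 y1 e).
have [eps [e0 e1 hF]] := @eps_exists R k p hk3 hp0 hp1 hfix.
exists eps; split => // V adj _ _ hnb x u.
have hdeg w : (0 < deg adj w)%N.
  have [v hv] := hnb w; apply/card_gt0P; exists v; by rewrite inE.
have phi01 w : 0 <= phi R adj x w /\ phi R adj x w <= 1.
  rewrite /phi; split; first by rewrite divr_ge0.
  rewrite ler_pdivrMr ?ltr0n // mul1r ler_nat /deg.
  by apply: subset_leq_card; apply/fintype.subsetP => y; rewrite inE => /andP[].
have phim w : phi R adj x w <= phimax R adj x.
  by rewrite /phimax (bigD1 w) //= le_max lexx.
rewrite Enext_eq.
have -> : \sum_(v in nbrs adj u) probR adj k p x v =
          \sum_(v in nbrs adj u) Fpk p k (phi R adj x v).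
  by apply: eq_bigr => v _; rewrite probR_eq.
have hle : \sum_(v in nbrs adj u) Fpk p k (phi R adj x v) <=
           \sum_(v in nbrs adj u) (1 - eps) * phimax R adj x.
  apply: ler_sum => v _; have [a b] := phi01 v.
  apply: le_trans (hF _ a b) _; apply: ler_wpM2l; last exact: phim.
  by rewrite subr_ge0.
rewrite sumr_const in hle.
have d0 : (deg adj u)%:R != 0 :> R by rewrite pnatr_eq0 -lt0n.
apply: le_trans (ler_wpM2l _ hle) _; first by rewrite invr_ge0 ler0n.
rewrite -[_ *+ #|_|]mulr_natr [X in _ * X]mulrC mulrA mulVf ?mul1r //.
Qed.
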